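(* Let $(\mathbb{R}^d,H,\mathcal{L})$ be a cut-and-project scheme such that $\mathcal{L}$ and $\mathcal{L}^\circ$ are both countable. Let $D$ be a lattice in $\mathbb{R}^d$ such that $D\cap\pi^G(\mathcal{L})=\{0\}$ and $D^\circ\cap\pi^{\widehat G}(\mathcal{L}^\circ)=\{0\}$. Let $\mathbb{K}=\mathbb{R}^d/D$ with quotient map $\psi:\mathbb{R}^d\to\mathbb{K}$. Then: (a) $\psi$ is injective on $\pi^G(\mathcal{L})$, and $\psi(\pi^G(\mathcal{L}))$ is dense in $\mathbb{K}$; (b) for every non-empty open set $U\subseteq H$ the set $\psi(\Lambda_U)$ is dense in $\mathbb{K}$.
   Context: $G=\mathbb{R}^d$. A cut-and-project scheme $(G,H,\mathcal{L})$ consists of locally compact abelian groups $G,H$ and a discrete cocompact subgroup $\mathcal{L}\subseteq G\times H$ such that $\pi^G|_{\mathcal{L}}$ is injective and $\pi^H(\mathcal{L})$ is dense in $H$; $\Lambda_U=\pi^G(\mathcal{L}\cap(G\times U))$. The dual group $\widehat G$ of $\mathbb{R}^d$ is identified with $\mathbb{R}^d$ via $x\mapsto(y\mapsto e^{2\pi i\langle x,y\rangle})$; $\mathcal{L}^\circ=\{(\chi,\eta)\in\widehat G\times\widehat H:\chi(g)\eta(h)=1\text{ for all }(g,h)\in\mathcal L\}$ is the annihilator of $\mathcal L$, and $\pi^{\widehat G}$ is the projection to $\widehat G$. For a lattice $D\subseteq\mathbb R^d$, $D^\circ=\{x\in\mathbb{R}^d:\langle y,x\rangle\in\mathbb{Z}\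 \forall y\in D\}$. *)

(* Defs.v *)
From HB Require Import structures.
From mathcomp Require Import all_boot all_order all_algebra.
From mathcomp Require Import all_classical all_reals all_analysis.
From mathcomp Require Import complex generic_quotient.
Set Implicit Arguments.
Unset Strict Implicit.
Unset Printing Implicit Defensive.
Import Order.TTheory GRing.Theory Num.Theory.
Import numFieldNormedType.Exports.
Local Open Scope classical_set_scope.
Local Open Scope ring_scope.
Local Open Scope quotient_scope.

Section Defs.
Variable R : realType.
Variable d : nat.

(* G = R^d as row vectors *)
Definition inner (x y : 'rV[R]_d) : R := \sum_(i < d) x 0 i * y 0 i.

Definition expi (t : R) : R[i] :=
  Complex (cos (2 * trigo.pi * t)) (sin (2 * trigo.pi * t)).

Definition charG (x y : 'rV[R]_d) : R[i] := expi (inner x y).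

Section CPS.
Variable H : topologicalZmodType.

Definition LCA_group : Prop :=
  hausdorff_space H /\ locally_compact [set: H].

Definition subgroup (L : set ('rV[R]_d * H)) : Prop :=
  L 0 /\ (forall a b, L a -> L b -> L (a - b)).

Definition discrete_subset (L : set ('rV[R]_d * H)) : Prop :=
  forall l, L l -> exists V, nbhs l V /\ V `&` L = [set l].

Definition cocompact (L : set ('rV[R]_d * H)) : Prop :=
  exists K : set ('rV[R]_d * H), compact K /\
    forall z, exists k l, K k /\ L l /\ z = k + l.

Definition cut_and_project_scheme (L : set ('rV[R]_d * H)) : Prop :=
  [/\ LCA_group, subgroup L, discrete_subset L, cocompact L
    & ((forall a b, L a -> L b -> a.1 = b.1 -> a = b) /\
       dense [set h | exists l, L l /\ l.2 = h])].

Definition model_set (L : set ('rV[R]_d * H)) (U : set H) : set 'rV[R]_d :=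
  [set g | exists l, L l /\ U l.2 /\ l.1 = g].

Definition proj_G (L : set ('rV[R]_d * H)) : set 'rV[R]_d :=
  [set g | exists l, L l /\ l.1 = g].

(* continuous characters of H : continuous homomorphisms into the unit
   circle of C = R[i]; C carries its usual (product = euclidean) topology,
   i.e. continuity of h |-> (Re, Im). *)
Definition character (eta : H -> R[i]) : Prop :=
  [/\ continuous (fun h => (complex.Re (eta h), complex.Im (eta h))),
      (forall h, `|eta h| = 1) &
      (forall a b, eta (a + b) = eta a * eta b)].

(* the annihilator L° in \hat G x \hat H, with \hat G identified with R^d *)
Definition annihilator (L : set ('rV[R]_d * H)) : set ('rV[R]_d * (H -> R[i])) :=
  [set p | character p.2 /\ forall l, L l -> charG p.1 l.1 * p.2 l.2 = 1].

Definition proj_dualG (L : set ('rV[R]_d * H)) : set 'rV[R]_d :=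
  [set x | exists eta, annihilator L (x, eta)].

End CPS.

Definition lattice_of (B : 'M[R]_d) : set 'rV[R]_d :=
  [set v | exists k : 'rV[R]_d, (forall i, k 0 i \is a Num.int) /\ v = k *m B].

Definition dual_lattice (D : set 'rV[R]_d) : set 'rV[R]_d :=
  [set x | forall y, D y -> inner y x \is a Num.int].

Definition lat_rel (B : 'M[R]_d) (x y : 'rV[R]_d) : bool :=
  `[< lattice_of B (x - y) >].

Lemma lat_rel_equiv (B : 'M[R]_d) : equiv_class_of (lat_rel B).
Proof.
rewrite /lat_rel; split.
- move=> x; apply/asboolP; exists 0; rewrite subrr mul0mx; split=> // i.
  by rewrite mxE.
- move=> x y; apply/asboolP/asboolP => -[k [kZ Hk]]; exists (- k); split.
  + by move=> i; rewrite !mxE rpredN.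
  + by rewrite mulNmx -Hk opprB.
  + by move=> i; rewrite !mxE rpredN.
  + by rewrite mulNmx -Hk opprB.
- move=> y x z /asboolP [k [kZ Hk]] /asboolP [k' [k'Z Hk']].
  apply/asboolP; exists (k + k'); split.
    by move=> i; rewrite !mxE; apply: rpredD.
  by rewrite mulmxDl -Hk -Hk' addrA subrK.
Qed.

Canonical lat_equiv (B : 'M[R]_d) := EquivRelPack (lat_rel_equiv B).

Definition torus (B : 'M[R]_d) : Type :=
  quotient_topology {eq_quot lat_equiv B}.

Definition torus_pi (B : 'M[R]_d) : 'rV[R]_d -> torus B :=
  fun x => \pi_(torus B) x.

End Defs.

(* Main.v *)
Require Import Defs.
From HB Require Import structures.
From mathcomp Require Import all_boot all_order all_algebra.
From mathcomp Require Import all_classical all_reals all_analysis.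
From mathcomp Require Import complex generic_quotient.
From mathcomp Require Import ring lra.
Set Implicit Arguments.
Unset Strict Implicit.
Unset Printing Implicit Defensive.
Import Order.TTheory GRing.Theory Num.Theory.
Import numFieldNormedType.Exports.
Local Open Scope classical_set_scope.
Local Open Scope ring_scope.

Section Aux.
Context {R : realType}.

Lemma mxnorm_entry m n (v : 'M[R]_(m,n)) i j : `|v i j| <= `|v|.
Proof.
change (`|v i j| <= mx_norm v); rewrite mx_normrE.
exact: (le_bigmax _ (fun ij : 'I_m * 'I_n => `|v ij.1 ij.2|) (i,j)).
Qed.

Lemma mxnorm_le m n (v : 'M[R]_(m,n)) r :
  0 <= r -> (forall i j, `|v i j| <= r) -> `|v| <= r.
Proof.
move=> r0 H; change (mx_norm v <= r); rewrite mx_normrE; apply: bigmax_le => // -[i j] _.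
Qed.

Lemma mulmx_norm m n (u : 'rV[R]_m) (M : 'M[R]_(m,n)) :
  `|u *m M| <= (\sum_i \sum_j `|M i j|) * `|u|.
Proof.
apply: mxnorm_le; first by apply: mulr_ge0; [apply: sumr_ge0 => i _; apply: sumr_ge0 | ].
move=> i j; rewrite mxE.
apply: (le_trans (ler_norm_sum _ _ _)).
rewrite mulr_suml; apply: ler_sum => k _.
rewrite normrM mulrC; apply: ler_pM => //.
  rewrite (bigD1 j) //= ler_wpDr //.
  by apply: sumr_ge0.
exact: mxnorm_entry.
Qed.

Lemma innerE d (x y : 'rV[R]_d) : inner x y = (x *m y^T) 0 0.
Proof. by rewrite /inner mxE; apply: eq_bigr => i _; rewrite mxE. Qed.

Lemma innerC d (x y : 'rV[R]_d) : inner x y = inner y x.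
Proof. by rewrite /inner; apply: eq_bigr => i _; rewrite mulrC. Qed.

Lemma innerDr d (x y z : 'rV[R]_d) : inner x (y + z) = inner x y + inner x z.
Proof. by rewrite /inner -big_split; apply: eq_bigr => i _; rewrite mxE mulrDr. Qed.

Lemma innerNr d (x y : 'rV[R]_d) : inner x (- y) = - inner x y.
Proof. by rewrite /inner -sumrN; apply: eq_bigr => i _; rewrite mxE mulrN. Qed.

Lemma innerBr d (x y z : 'rV[R]_d) : inner x (y - z) = inner x y - inner x z.
Proof. by rewrite innerDr innerNr. Qed.

Lemma innerZr d (x y : 'rV[R]_d) a : inner x (a *: y) = a * inner x y.
Proof. by rewrite /inner mulr_sumr; apply: eq_bigr => i _; rewrite mxE mulrCA. Qed.

Lemma inner0r d (x : 'rV[R]_d) : inner x 0 = 0.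
Proof. by rewrite /inner big1 // => i _; rewrite mxE mulr0. Qed.

Lemma inner_bound d (x y : 'rV[R]_d) : `|inner x y| <= (\sum_i `|x 0 i|) * `|y|.
Proof.
rewrite /inner; apply: (le_trans (ler_norm_sum _ _ _)).
rewrite mulr_suml; apply: ler_sum => i _; rewrite normrM.
by apply: ler_wpM2l => //; apply: mxnorm_entry.
Qed.

Lemma expiD (a b : R) : expi (a + b) = expi a * expi b.
Proof.
rewrite /expi mulrDr cosD sinD /=.
by congr Complex; ring.
Qed.

Lemma expi0 : expi (0 : R) = 1.
Proof. by rewrite /expi mulr0 cos0 sin0. Qed.

Lemma expiN (a : R) : expi (- a) * expi a = 1.
Proof. by rewrite -expiD addNr expi0. Qed.

Lemma expi_nat (n : nat) : expi (n%:R : R) = 1.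
Proof.
elim: n => [|n IH]; first by rewrite expi0.
rewrite -natr1 expiD IH mul1r /expi mulr1.
by rewrite mulrC mulr_natr cos2pi sin2pi.
Qed.

Lemma expi_int (z : R) : z \is a Num.int -> expi z = 1.
Proof.
case/intrP => n ->; case: n => n.
  by rewrite -pmulrn expi_nat.
have h : expi ((n.+1)%:~R : R) = 1 by rewrite -pmulrn expi_nat.
by rewrite NegzE mulrNz -(expiN (n.+1)%:~R) h mulr1.
Qed.

Lemma norm_expi (t : R) : `|expi t| = 1.
Proof.
by rewrite normc_def /= cos2Dsin2 sqrtr1.
Qed.


Lemma closed_lip m (V : normedModType R) (f : 'rV[R]_m -> V) (c : V) K :
  0 <= K -> (forall u v, `|f u - f v| <= K * `|u - v|) ->
  closed [set u | f u = c].
Proof.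
move=> K0 Hf p Hp; apply/eqP; rewrite -subr_eq0 -normr_eq0 eq_le normr_ge0 andbT.
apply/ler_addgt0Pr => e e0; rewrite add0r.
have dpos : 0 < e / (K + 1) by rewrite divr_gt0 // ltr_wpDl.
have [q [/= fq pq]] := Hp _ (nbhsx_ballx p _ dpos).
rewrite -fq; apply: (le_trans (Hf _ _)).
move: pq; rewrite -ball_normE /= => pq.
apply: (@le_trans _ _ ((K + 1) * (e / (K + 1)))).
  apply: ler_pM => //; first by rewrite ler_wpDr.
  exact: ltW.
by rewrite mulrC -mulrA mulVf ?mulr1 // gt_eqF // ltr_wpDl.
Qed.

Lemma compact_bounded m (A : set 'rV[R]_m) r :
  closed A -> (forall x, A x -> `|x| <= r) -> compact A.
Proof.
move=> cA Hr; apply: bounded_closed_compact => //.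
exists r; split; first exact: num_real.
by move=> M rM x Ax; apply: le_trans (Hr x Ax) (ltW rM).
Qed.

End Aux.

Section Kron.
Context {R : realType} {d : nat} (C : set 'rV[R]_d) (B : 'M[R]_d).
Context (Ccl : closed C) (C0 : C 0) (CB : forall a b, C a -> C b -> C (a - b))
  (CD : forall v, lattice_of B v -> C v).

Lemma CN a : C a -> C (- a).
Proof. by move=> Ca; rewrite -sub0r; apply: CB. Qed.

Lemma CDD a b : C a -> C b -> C (a + b).
Proof. by move=> Ca Cb; rewrite -[b]opprK; apply: CB => //; apply: CN. Qed.

Lemma CMn a n : C a -> C (a *+ n).
Proof. by move=> Ca; elim: n => [|n IH]; rewrite ?mulr0n // mulrS; apply: CDD. Qed.

Lemma CZint a z : C a -> z \is a Num.int -> C (z *: a).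
Proof.
move=> Ca /intrP [n ->]; rewrite scaler_int.
case: n => n; first by rewrite -pmulrn; apply: CMn.
by rewrite NegzE mulrNz; apply/CN/CMn.
Qed.

Lemma Csum (I : finType) (F : I -> 'rV[R]_d) :
  (forall i, C (F i)) -> C (\sum_i F i).
Proof. by move=> HF; apply: big_ind => //; apply: CDD. Qed.

Lemma Cint_comb n (k : 'rV[R]_n) (A : 'M[R]_(n,d)) :
  (forall i, k 0 i \is a Num.int) -> (forall i, C (row i A)) -> C (k *m A).
Proof.
move=> kZ HA; rewrite mulmx_sum_row; apply: Csum => i; exact: CZint.
Qed.

Lemma Crow i : C (row i B).
Proof.
apply: CD; exists 'e_i; split; last exact: rowE.
by move=> j; rewrite mxE; case: (_ == _); rewrite ?rpred0 ?rpred1.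
Qed.

Definition subsp (V : 'M[R]_d) := forall v : 'rV_d, (v <= V)%MS -> C v.

Lemma maxV : exists V, subsp V /\ forall V', subsp V' -> (\rank V' <= \rank V)%N.
Proof.
pose P n := `[< exists V, subsp V /\ \rank V = n >].
have exP : exists n, P n.
  exists 0%N; apply/asboolP; exists 0; split; last by rewrite mxrank0.
  by move=> v; rewrite submx0 => /eqP ->.
have ubP : forall n, P n -> (n <= d)%N.
  by move=> n /asboolP [V [_ <-]]; apply: rank_leq_col.
case: (ex_maxnP exP ubP) => m /asboolP [V [sV rV]] Hm.
exists V; split => // V' sV'; rewrite rV; apply: Hm.
by apply/asboolP; exists V'.
Qed.

Lemma line (u : 'rV[R]_d) :
  (forall e1 e2, 0 < e1 -> 0 < e2 -> exists w, [/\ C w, w != 0, `|w| < e1 &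
      `|u - `|w|^-1 *: w| < e2]) -> forall t, C (t *: u).
Proof.
move=> Hu t; apply: Ccl => Bs /nbhs_ballP [etaf eta0 Heta].
have t1 : 0 < `|t| + 1 by rewrite ltr_wpDl.
have [w [Cw w0 we1 we2]] := Hu (etaf / 2) (etaf / 2 / (`|t| + 1))
  (divr_gt0 eta0 (ltr0Sn _ 1)) (divr_gt0 (divr_gt0 eta0 (ltr0Sn _ 1)) t1).
have nw0 : 0 < `|w| by rewrite normr_gt0.
pose m := Num.floor (t / `|w|).
exists (m%:~R *: w); split; first by apply: CZint => //; apply: intr_int.
apply: Heta; rewrite -ball_normE /=.
have -> : t *: u - m%:~R *: w =
    t *: (u - `|w|^-1 *: w) + (t / `|w| - m%:~R) *: w.
  by rewrite scalerBr scalerBl scalerA addrA subrK.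
apply: (le_lt_trans (ler_normD _ _)).
rewrite !normrZ.
have h1 : `|t| * `|u - `|w|^-1 *: w| <= etaf / 2.
  apply: (@le_trans _ _ (`|t| * (etaf / 2 / (`|t| + 1)))).
    by apply: ler_wpM2l => //; apply: ltW.
  rewrite mulrCA; apply: ler_piMr; first by rewrite divr_ge0 // ltW.
  by rewrite ler_pdivrMr // mul1r ler_wpDr.
have h2 : `|t / `|w| - m%:~R| * `|w| < etaf / 2.
  apply: (@le_lt_trans _ _ (1 * `|w|)); last by rewrite mul1r.
  apply: ler_wpM2r => //; rewrite ger0_norm; last by rewrite subr_ge0 floor_le.
  have := floorD1_gt (t / `|w|); rewrite intrD /= => h; rewrite -/m; lra.
by rewrite (splitr etaf); apply: ler_ltD.
Qed.


Lemma mulmxMnl m n p (t : 'M[R]_(m,n)) (A : 'M[R]_(n,p)) q :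
  (t *+ q) *m A = (t *m A) *+ q.
Proof. by elim: q => [|q IH]; rewrite ?mul0mx // !mulrS mulmxDl IH. Qed.

Lemma row_free_inj r (A : 'M[R]_(r,d)) (s s' : 'rV[R]_r) :
  row_free A -> s *m A = s' *m A -> s = s'.
Proof.
by case/row_freeP => Bi HBi e; rewrite -[s]mulmx1 -[s']mulmx1 -HBi !mulmxA e.
Qed.

Lemma frac_itv (z : R) : 0 <= z - (Num.floor z)%:~R < 1.
Proof.
have h1 := floor_le z; have := floorD1_gt z; rewrite intrD /= => h2.
apply/andP; split; lra.
Qed.

Lemma pigeon r (A : 'M[R]_(r,d)) eps :
  0 < eps -> row_free A -> (forall i, C (row i A)) ->
  (forall w, C w -> (w <= A)%MS -> `|w| < eps -> w = 0) ->
  exists2 N : nat, (0 < N)%N & forall a, C a -> (a <= A)%MS ->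
    forall j, ((a *m pinvmx A) 0 j) *+ N \is a Num.int.
Proof.
move=> eps0 AF HA Hdisc.
pose M := \sum_i \sum_j `|A i j|.
have M0 : 0 <= M by apply: sumr_ge0 => i _; apply: sumr_ge0.
pose K := (Num.truncn (M / eps)).+1.
have K0 : (0 : R) < K%:R by rewrite ltr0n.
have MK : M / K%:R < eps.
  have := truncnS_gt (M / eps); rewrite -/K => h.
  by move: h; rewrite !ltr_pdivrMr // mulrC.
exists ((K ^ r)`!); first exact: fact_gt0.
move=> a Ca aA j.
set t := a *m pinvmx A.
have tK : t *m A = a := mulmxKpV aA.
pose fr (z : R) := z - (Num.floor z)%:~R.
pose cell (m : 'I_(K ^ r).+1) : {ffun 'I_r -> 'I_K} :=
  [ffun i => inord (Num.truncn (fr ((t *+ m) 0 i) * K%:R))].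
have [m1 [m2 [e ne]]] : exists m1 m2, cell m1 = cell m2 /\ m1 <> m2.
  apply: contrapT => Hn.
  have inj : injective cell.
    move=> m1 m2 e; apply: contrapT => ne; apply: Hn; by exists m1, m2.
  by have := leq_card _ inj; rewrite card_ffun !card_ord ltnn.
wlog lt12 : m1 m2 e ne / (m1 < m2)%N.
  move=> Hw; case: (ltngtP m1 m2) => h; first exact: (Hw m1 m2).
    by apply: (Hw m2 m1) => // h'; apply: ne.
  by exfalso; apply: ne; apply: val_inj.
pose q := (m2 - m1)%N.
have frcell : forall i, `|fr ((t *+ m2) 0 i) - fr ((t *+ m1) 0 i)| <= K%:R^-1.
  move=> i; have := congr1 (fun f : {ffun 'I_r -> 'I_K} => f i) e; rewrite /= !ffunE.
  have trK : forall z : R, 0 <= z < 1 -> (Num.truncn (z * K%:R) < K)%N.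
    move=> z /andP [z0 z1]; rewrite truncn_lt_nat; last by rewrite mulr_ge0 // ltW.
    by rewrite -ltr_pdivlMr // divff ?gt_eqF.
  have f1 := frac_itv ((t *+ m1) 0 i); have f2 := frac_itv ((t *+ m2) 0 i).
  move/(congr1 (@nat_of_ord K)); rewrite !inordK ?trK // => et.
  have i1 := truncn_itv (mulr_ge0 (proj1 (andP f1)) (ltW K0)).
  have i2 := truncn_itv (mulr_ge0 (proj1 (andP f2)) (ltW K0)).
  rewrite et in i1.
  set n := Num.truncn (fr ((t *+ m2) 0 i) * K%:R) in i1 i2.
  rewrite -[n.+1%:R]natr1 in i1 i2.
  move: i1 i2 => /andP [a1 b1] /andP [a2 b2].
  have hD : `|(fr ((t *+ m2) 0 i) - fr ((t *+ m1) 0 i)) * K%:R| <= 1.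
    rewrite mulrBl ler_norml; apply/andP; split; rewrite /fr in a1 b1 a2 b2 *; lra.
  rewrite normrM (ger0_norm (ltW K0)) in hD.
  by rewrite -[K%:R^-1]mul1r ler_pdivlMr.
pose zv := \row_i (fr ((t *+ m2) 0 i) - fr ((t *+ m1) 0 i)).
pose iv := \row_i ((Num.floor ((t *+ m2) 0 i))%:~R - (Num.floor ((t *+ m1) 0 i))%:~R : R).
have decomp : t *+ q = iv + zv.
  apply/rowP => i; rewrite !mxE !mulmxnE mulrnBr; last exact: ltnW.
  rewrite /fr; ring.
have ivZ : forall i, iv 0 i \is a Num.int.
  by move=> i; rewrite mxE rpredB // intr_int.
have y0 : zv *m A = 0.
  apply: Hdisc.
  - have -> : zv *m A = a *+ q - iv *m A.
      by rewrite -tK -mulmxMnl decomp mulmxDl addrC addKr.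
    by apply: CB; [apply: CMn | apply: Cint_comb].
  - exact: submxMl.
  - apply: (le_lt_trans (mulmx_norm _ _)); rewrite -/M.
    apply: le_lt_trans MK; apply: ler_wpM2l => //.
    apply: mxnorm_le; first by rewrite invr_ge0 ltW.
    by move=> i' i; rewrite [i']ord1 mxE; apply: frcell.
have zv0 : zv = 0 by apply: (row_free_inj AF); rewrite y0 mul0mx.
have tq : forall i, t 0 i *+ q \is a Num.int.
  by move=> i; rewrite -mulmxnE decomp zv0 addr0.
have qpos : (0 < q)%N by rewrite subn_gt0.
have qle : (q <= K ^ r)%N.
  by apply: (leq_trans (leq_subr _ _)); rewrite -ltnS.
have qd : (q %| (K ^ r)`!)%N by apply: dvdn_fact; rewrite qpos qle.
rewrite -(divnK qd) mulnC mulrnA.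
exact: rpredMn.
Qed.


Lemma inner_colT n (M : 'M[R]_(d,n)) j c :
  inner ((col j M)^T) c = (c *m M) 0 j.
Proof. by rewrite innerC /inner mxE; apply: eq_bigr => i _; rewrite !mxE. Qed.

Lemma innerMnl (x c : 'rV[R]_d) N : inner (x *+ N) c = inner x c *+ N.
Proof. by rewrite innerC -scaler_nat innerZr innerC mulr_natl. Qed.

Lemma kron : B \in unitmx -> (exists y, ~ C y) ->
  exists2 x, x != 0 & forall c, C c -> inner x c \is a Num.int.
Proof.
move=> Bu [y Cy].
have [V [sV maxR]] := maxV.
have rVlt : (\rank V < d)%N.
  rewrite ltnNge; apply/negP => rle; apply: Cy; apply: sV; apply: submx_full.
  by rewrite /row_full eqn_leq rank_leq_col rle.
set W := (V^C)%MS.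
have WV0 : (W :&: V)%MS = 0 by rewrite capmxC capmx_compl.
set P := proj_mx W V.
have PV : forall c : 'rV_d, (c - c *m P <= V)%MS.
  move=> c; apply: proj_mx_compl_sub; apply: submx_full.
  by rewrite addsmxC; apply: addsmx_compl_full.
have CP : forall c, C c -> C (c *m P).
  move=> c Cc; have -> : c *m P = c - (c - c *m P) by rewrite opprB addrC subrK.
  by apply: CB => //; apply: sV.
have PWid : forall w, (w <= W)%MS -> w *m P = w := fun w hw => proj_mx_id WV0 hw.
have [eps eps0 Hdisc] : exists2 eps : R, 0 < eps &
    forall w, C w -> (w <= W)%MS -> `|w| < eps -> w = 0.
  apply: contrapT => Hn.
  have Hs : forall e, 0 < e -> exists w, [/\ C w, (w <= W)%MS, w != 0 & `|w| < e].
    move=> e e0; apply: contrapT => Hne; apply: Hn; exists e => // w Cw wW we.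
    apply: contrapT => w0; apply: Hne; exists w; split => //; exact/eqP.
  pose S := [set u : 'rV[R]_d | `|u| = 1] `&` [set u | u *m cokermx W = 0].
  have cS : compact S.
    apply: (@compact_bounded _ _ _ 1); last by move=> x [/= -> _].
    apply: closedI.
      apply: (@closed_lip _ _ _ (fun u : 'rV[R]_d => `|u|) 1 1) => // u v.
      by rewrite mul1r ler_dist_dist.
    apply: (@closed_lip _ _ _ (fun u : 'rV[R]_d => u *m cokermx W) 0
      (\sum_i \sum_j `|cokermx W i j|)).
      by apply: sumr_ge0 => i _; apply: sumr_ge0.
    by move=> u v; rewrite -mulmxBl; apply: mulmx_norm.
  pose F := filter_from [set e : R | 0 < e] (fun e => [set u | exists w,
    [/\ C w, (w <= W)%MS, w != 0, `|w| < e & u = `|w|^-1 *: w]]).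
  have FF : ProperFilter F.
    apply: filter_from_proper; last first.
      move=> e e0; have [w [Cw wW w0 we]] := Hs e e0.
      by exists (`|w|^-1 *: w), w.
    apply: filter_from_filter; first by exists 1; rewrite /= ltr01.
    move=> e1 e2 e10 e20; exists (Num.min e1 e2); first by rewrite /= lt_min e10 e20.
    move=> u [w [Cw wW w0 we ->]]; move: we; rewrite lt_min => /andP [w1 w2].
    by split; exists w; split.
  have FS : F S.
    exists 1; first by rewrite /= ltr01.
    move=> u [w [Cw wW w0 we ->]]; split => /=.
      by rewrite normrZ normfV normr_id mulVf // normr_eq0.
    by apply/eqP; rewrite -submxE; apply: scalemx_sub.
  have [u [Su clu]] := cS F FF FS.
  have Cline : forall t, C (t *: u).
    apply: line => e1 e2 e10 e20.
    have FA : F [set u | exists w,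
        [/\ C w, (w <= W)%MS, w != 0, `|w| < e1 & u = `|w|^-1 *: w]].
      by exists e1.
    have [v [[w [Cw wW w0 we ->]] uv]] := clu _ _ FA (nbhsx_ballx u e2 e20).
    exists w; split => //.
    by move: uv; rewrite -ball_normE.
  have uW : (u <= W)%MS by rewrite submxE; apply/eqP; case: Su.
  have sVu : subsp (V + u)%MS.
    move=> v /sub_addsmxP [[a b] /= ->]; apply: CDD; first by apply: sV; apply: submxMl.
    by rewrite (mx11_scalar b) mul_scalar_mx; apply: Cline.
  have le2 := maxR _ sVu.
  have h := mxrank_leqif_sup (addsmxSl V u).
  have eqr : \rank V == \rank (V + u)%MS by rewrite eqn_leq h.1 le2.
  rewrite h.2 in eqr.
  have uV : (u <= V)%MS := submx_trans (addsmxSr V u) eqr.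
  have : (u <= W :&: V)%MS by rewrite sub_capmx uW uV.
  rewrite WV0 submx0 => /eqP u0; case: Su => /= nu _.
  by move: nu; rewrite u0 normr0 => /eqP; rewrite eq_sym oner_eq0.
set Bp := B *m P.
set Aj := rowsub (maxrankfun Bp) Bp.
have AjF : row_free Aj := maxrowsub_free Bp.
have Ajeq : (Aj :=: Bp)%MS := eq_maxrowsub Bp.
have BpW : (Bp <= W)%MS := proj_mx_sub _ _ _.
have WBp : (W <= Bp)%MS.
  have -> : W = W *m invmx B *m Bp.
    by rewrite /Bp mulmxA -(mulmxA W) mulVmx // mulmx1 PWid.
  exact: submxMl.
have AjW : (Aj <= W)%MS by rewrite Ajeq.
have WAj : (W <= Aj)%MS by rewrite Ajeq.
have rpos : (0 < \rank Bp)%N.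
  have := mxrankS WBp; rewrite mxrank_compl => h; apply: leq_trans h.
  by rewrite subn_gt0.
have CAj : forall i, C (row i Aj).
  by move=> i; rewrite row_rowsub /Bp row_mul; apply: CP; apply: Crow.
have AjK : forall w : 'rV_d, (w <= W)%MS -> w *m pinvmx Aj *m Aj = w.
  by move=> w wW; apply: mulmxKpV; apply: submx_trans wW WAj.
have [N N0 HN] := pigeon eps0 AjF CAj
  (fun w Cw wA => Hdisc w Cw (submx_trans wA AjW)).
pose j0 : 'I_(\rank Bp) := Ordinal rpos.
exists ((col j0 (P *m pinvmx Aj))^T *+ N).
  apply/negP => /eqP x0.
  have Cr := CAj j0.
  have rW : (row j0 Aj <= W)%MS := submx_trans (row_sub _ _) AjW.
  have e1 : row j0 Aj *m pinvmx Aj = 'e_j0.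
    by apply: (row_free_inj AjF); rewrite AjK // rowE.
  have := innerMnl ((col j0 (P *m pinvmx Aj))^T) (row j0 Aj) N.
  rewrite x0 inner_colT mulmxA PWid // e1 mxE eqxx /=.
  rewrite innerC inner0r => /eqP; rewrite eq_sym pnatr_eq0 => /eqP N0'.
  by move: N0; rewrite N0'.
move=> c Cc; rewrite innerMnl inner_colT mulmxA.
apply: HN; first exact: CP.
exact: submx_trans (proj_mx_sub _ _ _) WAj.
Qed.

End Kron.

Section TorusEq.
Local Open Scope quotient_scope.
Context {R : realType} {d : nat} (B : 'M[R]_d).
Lemma torus_eq x y : lat_rel B x y -> torus_pi B x = torus_pi B y.
Proof.
move=> h; rewrite /torus_pi.
have := @eqquotP _ _ {eq_quot lat_equiv B} x y => HH.
have e : x = y %[mod {eq_quot lat_equiv B}] by apply/HH; exact: h.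
exact: e.
Qed.
Lemma torus_eqE x y : torus_pi B x = torus_pi B y -> lattice_of B (x - y).
Proof.
move=> e.
have HH := @eqquotP _ _ {eq_quot lat_equiv B} x y.
have : lat_equiv B x y by apply/HH; exact: e.
by move/asboolP.
Qed.
End TorusEq.

Section Main.
Context {R : realType} {d : nat} {H : topologicalZmodType}
  (L : set ('rV[R]_d * H)) (B : 'M[R]_d).
Context (L0 : L 0) (LB : forall a b, L a -> L b -> L (a - b))
  (Ldense : dense [set h | exists l, L l /\ l.2 = h]) (Bu : B \in unitmx).

Lemma subsplit (h h' : H) N : nbhs (h - h') N ->
  exists N1 N2, [/\ nbhs h N1, nbhs h' N2 & forall a b, N1 a -> N2 b -> N (a - b)].
Proof.
move=> HN; have := @sub_continuous H (h, h') N HN.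
move=> H0; have H1 : nbhs (h, h') [set p | N (p.1 - p.2)] := H0.
move: H1 => [[A1 A2] /= [nA1 nA2] sA].
by exists A1, A2; split => // a b a1 b2; exact: (sA (a,b)).
Qed.

Lemma addsplit (h h' : H) N : nbhs (h + h') N ->
  exists N1 N2, [/\ nbhs h N1, nbhs h' N2 & forall a b, N1 a -> N2 b -> N (a + b)].
Proof.
move=> HN; have := @add_continuous H (h, h') N HN.
move=> H0; have H1 : nbhs (h, h') [set p | N (p.1 + p.2)] := H0.
move: H1 => [[A1 A2] /= [nA1 nA2] sA].
by exists A1, A2; split => // a b a1 b2; exact: (sA (a,b)).
Qed.

Lemma dense_nbhs (h : H) (N : set H) : nbhs h N -> exists l, L l /\ N l.2.
Proof.
rewrite (@nbhsE H h) /=; case => O1 [oO Oh] ON.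
have [z [Oz [l [Ll lz]]]] := Ldense (ex_intro _ h Oh) oO.
by exists l; split => //; apply: ON; rewrite lz.
Qed.

Lemma latB0 : lattice_of B 0.
Proof. by exists 0; split; [move=> i; rewrite mxE | rewrite mul0mx]. Qed.

Lemma latBB a b : lattice_of B a -> lattice_of B b -> lattice_of B (a - b).
Proof.
move=> [k [kZ ->]] [k' [k'Z ->]]; exists (k - k'); split; last by rewrite mulmxBl.
by move=> i; rewrite !mxE rpredB.
Qed.

Definition Rel (g : 'rV[R]_d) (h : H) := forall e, 0 < e -> forall N, nbhs h N ->
  exists l, [/\ L l, N l.2 & exists dl, lattice_of B dl /\ `|l.1 + dl - g| < e].

Lemma RelL l : L l -> Rel l.1 l.2.
Proof.
move=> Ll e e0 N HN; exists l; split => //; first exact: nbhs_singleton.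
by exists 0; split; [exact: latB0 | rewrite addr0 subrr normr0].
Qed.

Lemma RelD dl : lattice_of B dl -> Rel dl 0.
Proof.
move=> Dd e e0 N HN; exists 0; split => //; first exact: nbhs_singleton.
by exists dl; split => //; rewrite /= add0r subrr normr0.
Qed.

Lemma RelB (g : 'rV[R]_d) (h : H) g' (h' : H) : Rel g h -> Rel g' h' -> Rel (g - g') (h - h').
Proof.
move=> R1 R2 e e0 N HN.
have [N1 [N2 [n1 n2 sN]]] := subsplit HN.
have e2 : 0 < e / 2 by rewrite divr_gt0.
have [l [Ll Nl [dl [Ddl hl]]]] := R1 _ e2 _ n1.
have [l' [Ll' Nl' [dl' [Ddl' hl']]]] := R2 _ e2 _ n2.
exists (l - l'); split; [exact: LB | exact: sN | ].
exists (dl - dl'); split; first exact: latBB.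
have -> : (l - l').1 + (dl - dl') - (g - g') = (l.1 + dl - g) - (l'.1 + dl' - g').
  by apply/rowP => i; rewrite /= !mxE; ring.
apply: (le_lt_trans (ler_normB _ _)).
by rewrite (splitr e); apply: ltrD.
Qed.

Lemma Rel00 : Rel 0 0.
Proof. by have := RelL L0. Qed.

Lemma RelN (g : 'rV[R]_d) (h : H) : Rel g h -> Rel (- g) (- h).
Proof. by move=> R1; have := RelB Rel00 R1; rewrite !sub0r. Qed.

Lemma RelDD (g : 'rV[R]_d) (h : H) g' (h' : H) : Rel g h -> Rel g' h' -> Rel (g + g') (h + h').
Proof. by move=> R1 R2; have := RelB R1 (RelN R2); rewrite !opprK. Qed.

Lemma RelCl (g : 'rV[R]_d) (h : H) : (forall e, 0 < e -> forall N, nbhs h N ->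
  exists g' h', [/\ `|g' - g| < e, N h' & Rel g' h']) -> Rel g h.
Proof.
move=> Hc e e0 N; rewrite (@nbhsE H h) /=; case => O1 [oO Oh] ON.
have e2 : 0 < e / 2 by rewrite divr_gt0.
have [g' [h' [gg' Oh' Rg']]] := Hc _ e2 O1 (open_nbhs_nbhs (conj oO Oh)).
have [l [Ll Ol [dl [Ddl hl]]]] := Rg' _ e2 O1 (open_nbhs_nbhs (conj oO Oh')).
exists l; split => //; first exact: ON.
exists dl; split => //.
have -> : l.1 + dl - g = (l.1 + dl - g') + (g' - g) by rewrite addrA subrK.
apply: (le_lt_trans (ler_normD _ _)).
by rewrite (splitr e); apply: ltrD.
Qed.

Definition Cset := [set g | Rel g 0].

Lemma Cset_closed : closed Cset.
Proof.
move=> p Hp; apply: RelCl => e e0 N HN.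
have [q [Cq pq]] := Hp _ (nbhsx_ballx p _ e0).
exists q, 0; split => //; last exact: nbhs_singleton.
by move: pq; rewrite -ball_normE /= distrC.
Qed.

Definition rho := \sum_i \sum_j `|B i j|.

Lemma shift (g : 'rV[R]_d) : exists dl, lattice_of B dl /\ `|g + dl| <= rho.
Proof.
pose y := g *m invmx B.
pose fl := \row_i ((Num.floor (y 0 i))%:~R : R).
exists (- (fl *m B)); split.
  exists (- fl); split; last by rewrite mulNmx.
  by move=> i; rewrite !mxE rpredN intr_int.
have -> : g + - (fl *m B) = (y - fl) *m B by rewrite mulmxBl mulmxKV.
apply: (le_trans (mulmx_norm _ _)); rewrite -/rho.
rewrite -[X in _ <= X]mulr1; apply: ler_wpM2l.
  by apply: sumr_ge0 => i _; apply: sumr_ge0.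
apply: mxnorm_le => // i j; rewrite (ord1 i) !mxE.
have := frac_itv (y 0 j); rewrite /y mxE => /andP [a b].
by rewrite ger0_norm // ltW.
Qed.

Lemma rho_ball : compact [set v : 'rV[R]_d | `|v| <= rho].
Proof.
apply: (@compact_bounded _ _ _ rho); last by [].
have := @closed_closed_ball_ R 'rV[R]_d 0 rho.
rewrite /closed_ball_ => cl.
by have -> : [set v : 'rV[R]_d | `|v| <= rho] = [set v | `|0 - v| <= rho]
  by apply/seteqP; split => v /=; rewrite sub0r normrN.
Qed.

Lemma Rel_ex (h : H) : exists g, Rel g h.
Proof.
pose F := filter_from (nbhs h) (fun N => [set f : 'rV[R]_d | `|f| <= rho /\
  exists l, [/\ L l, N l.2 & exists dl, lattice_of B dl /\ f = l.1 + dl]]).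
have FF : ProperFilter F.
  apply: filter_from_proper; last first.
    move=> N HN; have [l [Ll Nl]] := dense_nbhs HN.
    have [dl [Ddl hdl]] := shift l.1.
    by exists (l.1 + dl); split => //; exists l; split => //; exists dl.
  apply: filter_from_filter; first by exists setT; apply: filterT.
  move=> N1 N2 n1 n2; exists (N1 `&` N2); first exact: filterI.
  by move=> f [fr [l [Ll [Nl1 Nl2] Hd]]]; split; split => //; exists l.
have FB : F [set v : 'rV[R]_d | `|v| <= rho].
  by exists setT; [apply: filterT | move=> f []].
have [g [_ clg]] := rho_ball FF FB.
exists g => e e0 N HN.
have FA : F [set f : 'rV[R]_d | `|f| <= rho /\
  exists l, [/\ L l, N l.2 & exists dl, lattice_of B dl /\ f = l.1 + dl]].
  by exists N.
have [f [[_ [l [Ll Nl [dl [Ddl ->]]]]] gf]] := clg _ _ FA (nbhsx_ballx g e e0).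
exists l; split => //; exists dl; split => //.
by move: gf; rewrite -ball_normE /= distrC.
Qed.


Lemma LN a : L a -> L (- a).
Proof. by move=> La; rewrite -sub0r; apply: LB. Qed.

Lemma LDD a b : L a -> L b -> L (a + b).
Proof. by move=> La Lb; rewrite -[b]opprK; apply: LB => //; apply: LN. Qed.

Lemma CsetB a b : Cset a -> Cset b -> Cset (a - b).
Proof. by move=> Ca Cb; have := RelB Ca Cb; rewrite /Cset /= subrr. Qed.

Section Eta.
Context (x : 'rV[R]_d) (xC : forall c, Cset c -> inner x c \is a Num.int).

Definition etaf (h : H) : R[i] := expi (- inner x (xget 0 [set g | Rel g h])).

Lemma etaE (g : 'rV[R]_d) (h : H) : Rel g h -> etaf h = expi (- inner x g).
Proof.
move=> Rg; rewrite /etaf; set g' := xget _ _.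
have Rg' : Rel g' h := xgetPex 0 (Rel_ex h).
have : inner x (g' - g) \is a Num.int.
  by apply: xC; have := RelB Rg' Rg; rewrite /Cset /= subrr.
rewrite innerBr => hz.
have -> : - inner x g' = - inner x g + - (inner x g' - inner x g) by ring.
have hz2 : - (inner x g' - inner x g) \is a Num.int by rewrite rpredN.
by rewrite expiD (expi_int hz2) mulr1.
Qed.

Lemma cont_claim (h0 : H) g0 del : Rel g0 h0 -> 0 < del ->
  exists N, nbhs h0 N /\ forall h, N h ->
    exists g, Rel g h /\ `|inner x g - inner x g0| < del.
Proof.
move=> R0 del0; apply: contrapT => Hn.
pose bad h := forall g, Rel g h -> del <= `|inner x g - inner x g0|.
have Hbad : forall N, nbhs h0 N -> exists h, N h /\ bad h.
  move=> N HN; apply: contrapT => Hb; apply: Hn; exists N; split => // h Nh.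
  apply: contrapT => Hg; apply: Hb; exists h; split => // g Rg.
  rewrite leNgt; apply/negP => lt; apply: Hg; by exists g.
pose F := filter_from (nbhs h0) (fun N => [set f : 'rV[R]_d | `|f| <= rho /\
  exists h, [/\ N h, bad h & Rel f h]]).
have FF : ProperFilter F.
  apply: filter_from_proper; last first.
    move=> N HN; have [h [Nh bh]] := Hbad N HN.
    have [g Rg] := Rel_ex h; have [dl [Ddl hdl]] := shift g.
    exists (g + dl); split => //; exists h; split => //.
    by have := RelDD Rg (RelD Ddl); rewrite addr0.
  apply: filter_from_filter; first by exists setT; apply: filterT.
  move=> N1 N2 n1 n2; exists (N1 `&` N2); first exact: filterI.
  by move=> f [fr [h [[Nh1 Nh2] bh Rh]]]; split; split => //; exists h.
have FB : F [set v : 'rV[R]_d | `|v| <= rho].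
  by exists setT; [apply: filterT | move=> f []].
have [gs [_ clg]] := rho_ball FF FB.
have Rgs : Rel gs h0.
  apply: RelCl => e e0 N HN.
  have FA : F [set f : 'rV[R]_d | `|f| <= rho /\ exists h, [/\ N h, bad h & Rel f h]].
    by exists N.
  have [f [[_ [h [Nh bh Rf]]] gf]] := clg _ _ FA (nbhsx_ballx gs e e0).
  exists f, h; split => //.
  by move: gf; rewrite -ball_normE /= distrC.
pose cx := \sum_i `|x 0 i|.
have cx0 : 0 <= cx by apply: sumr_ge0.
have e0 : 0 < del / (cx + 1) by rewrite divr_gt0 // ltr_wpDl.
have FA : F [set f : 'rV[R]_d | `|f| <= rho /\ exists h, [/\ setT h, bad h & Rel f h]].
  by exists setT => //; apply: filterT.
have [f [[_ [h [_ bh Rf]]] gf]] := clg _ _ FA (nbhsx_ballx gs _ e0).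
have Rgg : Rel (f - (gs - g0)) h.
  by have := RelB Rf (RelB Rgs R0); rewrite subrr subr0.
have := bh _ Rgg.
rewrite !innerBr.
have -> : inner x f - (inner x gs - inner x g0) - inner x g0 = inner x (f - gs).
  by rewrite innerBr; ring.
move: gf; rewrite -ball_normE /= distrC => gf.
have := inner_bound x (f - gs); rewrite -/cx => hb.
have : cx * `|f - gs| < del.
  apply: (@le_lt_trans _ _ (cx * (del / (cx + 1)))).
    by apply: ler_wpM2l => //; apply: ltW.
  rewrite mulrCA; apply: (@lt_le_trans _ _ (del * 1)); last by rewrite mulr1.
  by rewrite ltr_pM2l // ltr_pdivrMr ?mul1r ?ltrDl // ltr_wpDl.
move=> h1 h2; have := le_trans h2 hb; rewrite leNgt => /negP; apply.
exact: h1.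
Qed.

Lemma eta_char : character etaf.
Proof.
split.
- move=> h0; have [g0 R0] := Rel_ex h0.
  pose phi (t : R) := (complex.Re (expi (- t)), complex.Im (expi (- t))).
  have lc : continuous (fun t : R => 2 * trigo.pi * - t).
    move=> t; apply: (@continuous_comp _ _ _ _ ( *%R (2 * trigo.pi))).
      exact: opp_continuous.
    exact: mulrl_continuous.
  have phic : continuous phi.
    move=> t A; rewrite /phi /expi /=; move=> [[A1 A2] /= [n1 n2] sA].
    have c1 : nbhs t ((fun s => cos (2 * trigo.pi * - s)) @^-1` A1).
      exact: (continuous_comp (lc t) (@continuous_cos _ _)).
    have c2 : nbhs t ((fun s => sin (2 * trigo.pi * - s)) @^-1` A2).
      exact: (continuous_comp (lc t) (@continuous_sin _ _)).
    by apply: filterS (filterI c1 c2) => s [a1 a2]; apply: (sA (_, _)).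
  move=> A HA.
  have H1 : nbhs (inner x g0) (phi @^-1` A).
    by apply: (phic (inner x g0) A); rewrite /phi -(etaE R0).
  move: H1 => /nbhs_ballP [del del0 Hball].
  have [N [HN HNg]] := cont_claim R0 del0.
  apply: filterS HN => h Nh.
  have [g [Rg hg]] := HNg h Nh.
  rewrite /preimage /=. suff -> : (complex.Re (etaf h), complex.Im (etaf h)) = phi (inner x g).
    apply: (Hball (inner x g)).
    by rewrite -ball_normE /= distrC.
  by rewrite /phi -(etaE Rg).
- by move=> h; rewrite /etaf norm_expi.
- move=> a b; have [ga Ra] := Rel_ex a; have [gb Rb] := Rel_ex b.
  by rewrite (etaE Ra) (etaE Rb) (etaE (RelDD Ra Rb)) innerDr opprD expiD.
Qed.

Lemma eta_annih : annihilator L (x, etaf).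
Proof.
split; first exact: eta_char.
move=> l Ll /=; rewrite (etaE (RelL Ll)) /charG mulrC.
exact: expiN.
Qed.

End Eta.

Lemma Cset_all : dual_lattice (lattice_of B) `&` proj_dualG L = [set 0] ->
  forall y, Cset y.
Proof.
move=> hyp y; apply: contrapT => ny.
have [x x0 xC] := @kron R d Cset B Cset_closed Rel00 CsetB RelD Bu
  (ex_intro _ y ny).
have : (dual_lattice (lattice_of B) `&` proj_dualG L) x.
  split; last by exists (etaf x); apply: eta_annih.
  by move=> z Dz; rewrite innerC; apply: xC; apply: RelD.
by rewrite hyp => /= x0'; move: x0; rewrite x0' eqxx.
Qed.

Lemma density : (forall y, Cset y) -> forall U : set H, open U -> U !=set0 ->
  dense (torus_pi B @` model_set L U).
Proof.
move=> Call U oU Une Os [pt Oo] oO.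
have oP : open (torus_pi B @^-1` Os) := oO.
pose g0 := repr pt.
have g0O : (torus_pi B @^-1` Os) g0 by rewrite /= /torus_pi /g0 reprK.
have := open_nbhs_nbhs (conj oP g0O) => /nbhs_ballP [e e0 Hball].
have [z [Uz [l0 [Ll0 l0z]]]] := Ldense Une oU.
rewrite -l0z in Uz.
have [N1 [N2 [n1 n2 sN]]] : exists N1 N2, [/\ nbhs 0 N1, nbhs l0.2 N2 &
    forall a b, N1 a -> N2 b -> U (a + b)].
  apply: addsplit; rewrite add0r; exact: open_nbhs_nbhs.
have [l [Ll Nl [dl [Ddl hl]]]] := Call (g0 - l0.1) e e0 N1 n1.
pose p := l.1 + l0.1.
exists (torus_pi B p); split; last first.
  exists p => //; exists (l + l0); split; first exact: LDD.
  by split => //; apply: sN => //; apply: nbhs_singleton.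
have -> : torus_pi B p = torus_pi B (p + dl).
  apply: torus_eq; apply/asboolP.
  by rewrite opprD addrA subrr; apply: latBB => //; apply: latB0.
apply: (Hball (p + dl)).
rewrite -ball_normE /= distrC.
by have -> : p + dl - g0 = l.1 + dl - (g0 - l0.1) by rewrite /p opprB addrA; congr (_ + _);
  rewrite addrAC.
Qed.

End Main.

Theorem lemma6p2 (R : realType) (d : nat) (H : topologicalZmodType)
  (L : set ('rV[R]_d * H)) :
  cut_and_project_scheme L ->
  countable L -> countable (annihilator L) ->
  forall B : 'M[R]_d, B \in unitmx ->
  lattice_of B `&` proj_G L = [set 0] ->
  dual_lattice (lattice_of B) `&` proj_dualG L = [set 0] ->
  ((forall x y, proj_G L x -> proj_G L y ->
       torus_pi B x = torus_pi B y -> x = y) /\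
   dense (torus_pi B @` proj_G L)) /\
  (forall U : set H, open U -> U !=set0 ->
     dense (torus_pi B @` model_set L U)).
Proof.
move=> [_ [L0 LB] _ _ [_ Ldense]] _ _ B Bu hD hDual.
have Call := Cset_all L0 LB Ldense Bu hDual.
have dens := density L0 LB Ldense Call.
split; [split|exact: dens].
- move=> x y [lx [Llx <-]] [ly [Lly <-]] e.
  have lat := torus_eqE e.
  have : (lattice_of B `&` proj_G L) (lx.1 - ly.1).
    by split => //; exists (lx - ly); split => //; apply: LB.
  by rewrite hD => /= /eqP; rewrite subr_eq0 => /eqP.
- have -> : proj_G L = model_set L setT.
    by apply/seteqP; split => g [l [Ll]]; [move=> <-; exists l | move=> [_ <-]; exists l].
  by apply: dens; [exact: openT | exists 0].
Qed.
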